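(* Let $P_n$ be a labeled path such that the number of left-upper corners of its ribbon diagram $RT(P_n)$ differs from the number of right-lower corners of $RT(P_n)$. Then $X(P_n;\mathbf{x},q)$ is not palindromic, and hence not symmetric.
   Context: A labeled path $P_n$ is the path graph with vertices $v_1,\dots,v_n$ (edges $v_iv_{i+1}$) where $v_i$ carries label $\sigma_i$ for a permutation $\sigma$ of $[n]$; vertices are identified with labels. A proper coloring is $c\colon[n]\to\{1,2,\dots\}$ with adjacent vertices colored differently; $\operatorname{asc}(c)=\#\{ij\in E: i<j,\ c(i)<c(j)\}$. The CQF is $X(P_n;\mathbf{x},q)=\sum_{c \text{ proper}} x_{c(1)}\cdots x_{c(n)}q^{\operatorname{asc}(c)}$. It is symmetric if each coefficient of $q^k$ is a symmetric function, and palindromic if the coefficient of $q^k$ equals that of $q^{(n-1)-k}$ for all $k$. The ad-pattern of $P_n$ is $w_1\cdots w_{n-1}$ with $w_i=a$ if $\sigma_i<\sigma_{i+1}$ and $w_i=d$ otherwise. The ribbon diagram $RT(P_n)$ consists of $n$ unit boxes placed in the plane: start with box $1$, and for $i=1,\dots,n-1$ place box $i+1$ immediately to the right of box $i$ if $w_i=a$ and immediately above box $i$ if $w_i=d$. A left-upper (LU) corner is a box with no box immediately to its left and no box immediately above it; a right-lower (RL) corner is a box with no box immediately to its right and no box immediately below it. *)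

(* Defs.v *)
From mathcomp Require Import all_boot all_order all_fingroup.
Set Implicit Arguments. Unset Strict Implicit. Unset Printing Implicit Defensive.

(* Labeled path P_n: positions 0..n-1 (v_{i+1} in the paper is position i),
   position i carries label (sigma i) : 'I_n (labels 0..n-1 instead of 1..n;
   only the relative order of labels matters). *)

Section LabeledPath.
Variables (n : nat) (sigma : {perm 'I_n}).

(* label at position i (dummy 0 outside 0..n-1, never used there) *)
Definition lab (i : nat) : nat := oapp (fun j : 'I_n => val (sigma j)) 0 (insub i).

(* ad-pattern letter w_i for i < n-1 : true = 'a', false = 'd' *)
Definition adw (i : nat) : bool := lab i < lab i.+1.

(* ribbon diagram: coordinates of box i (0-indexed); box 0 at (0,0),
   box i+1 right of box i if w_i = a, above box i if w_i = d. *)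
Definition bx (i : nat) : nat := \sum_(j < i) (adw j : nat).
Definition by_ (i : nat) : nat := \sum_(j < i) (~~ adw j : nat).

Definition is_LU (i : 'I_n) : bool :=
  ~~ [exists j : 'I_n, (bx j + 1 == bx i) && (by_ j == by_ i)] &&
  ~~ [exists j : 'I_n, (bx j == bx i) && (by_ j == by_ i + 1)].

Definition is_RL (i : 'I_n) : bool :=
  ~~ [exists j : 'I_n, (bx j == bx i + 1) && (by_ j == by_ i)] &&
  ~~ [exists j : 'I_n, (bx j == bx i) && (by_ j + 1 == by_ i)].

Definition numLU : nat := #|[set i : 'I_n | is_LU i]|.
Definition numRL : nat := #|[set i : 'I_n | is_RL i]|.

(* colorings with colors in 'I_m (color j stands for variable x_{j+1}) *)
Section Colorings.
Variable m : nat.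
Implicit Type c : {ffun 'I_n -> 'I_m}.

Definition colof c (l : nat) : nat := oapp (fun j : 'I_n => val (c j)) 0 (insub l).

Definition proper c : bool :=
  [forall i : 'I_n, (i.+1 < n) ==> (colof c (lab i) != colof c (lab i.+1))].

Definition asc_edge c (i : nat) : bool :=
  ((lab i < lab i.+1) && (colof c (lab i) < colof c (lab i.+1))) ||
  ((lab i.+1 < lab i) && (colof c (lab i.+1) < colof c (lab i))).

Definition asc c : nat := \sum_(i < n | i.+1 < n) (asc_edge c i : nat).
End Colorings.

(* coefficient of x_1^{alpha_0} ... x_m^{alpha_{m-1}} q^k in X(P_n; x, q),
   where m = size alpha. *)
Definition cqf_coef (alpha : seq nat) (k : nat) : nat :=
  #|[set c : {ffun 'I_n -> 'I_(size alpha)} |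
      [&& proper c,
          [forall j : 'I_(size alpha), #|[set v | c v == j]| == nth 0 alpha j]
        & asc c == k]]|.

Definition cqf_palindromic : Prop :=
  forall (alpha : seq nat) (k : nat), k <= n.-1 ->
    cqf_coef alpha k = cqf_coef alpha (n.-1 - k).

(* symmetric: each coefficient of q^k is invariant under permuting variables
   (exponent vectors padded with zeros, so any permutation of variables is
   covered by a permutation of a long enough exponent sequence). *)
Definition cqf_symmetric : Prop :=
  forall (k : nat) (alpha beta : seq nat), perm_eq alpha beta ->
    cqf_coef alpha k = cqf_coef beta k.

End LabeledPath.

(* Main.v *)
Require Import Defs.
From mathcomp Require Import all_boot all_order all_fingroup.
From mathcomp Require Import zify.
Set Implicit Arguments. Unset Strict Implicit. Unset Printing Implicit Defensive.

Lemma card_edges n : \sum_(i < n | i.+1 < n) 1 = n.-1.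
Proof.
case: n => [|n]; first by rewrite big_ord0.
rewrite big_mkcond big_ord_recr /= ltnn addn0.
rewrite (eq_bigr (fun _ => 1)) => [|i _]; last by rewrite /= ltnS ltn_ord.
by rewrite sum_nat_const card_ord muln1.
Qed.

Section S.
Variables (n : nat) (sigma : {perm 'I_n}).
Local Notation lab := (Defs.lab sigma).
Local Notation adw := (Defs.adw sigma).
Local Notation bx := (Defs.bx sigma).
Local Notation by_ := (Defs.by_ sigma).

Definition corner (b : bool) (i : nat) : bool :=
  ((i == 0) || (adw i.-1 != b)) && ((i.+1 == n) || (adw i == b)).

Definition kb (b : bool) : nat := if b then n.-1 else 0.

Lemma lab_ord (i : 'I_n) : lab i = val (sigma i).
Proof. by rewrite /Defs.lab valK. Qed.

Lemma colof_ord m (c : {ffun 'I_n -> 'I_m}) (v : 'I_n) : colof c (val v) = val (c v).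
Proof. by rewrite /colof valK. Qed.

Lemma bxS i : bx i.+1 = bx i + adw i.
Proof. by rewrite /Defs.bx big_ord_recr. Qed.
Lemma byS i : by_ i.+1 = by_ i + ~~ adw i.
Proof. by rewrite /Defs.by_ big_ord_recr. Qed.
Lemma bxy i : bx i + by_ i = i.
Proof.
elim: i => [|i IH]; first by rewrite /Defs.bx /Defs.by_ !big_ord0.
rewrite bxS byS addnACA IH. by case: (adw i); rewrite /= ?addn0 ?addn1.
Qed.

Ltac solveb := first [ by apply/andP; split; apply/eqP; lia
                     | by apply/negbTE; apply/negP => /andP[/eqP ? /eqP ?]; lia ].

Lemma ex1 i j : (bx j + 1 == bx i) && (by_ j == by_ i) = (i == j.+1) && adw j.
Proof.
have hi := bxy i; have hj := bxy j.
case: (eqVneq i j.+1) => [e|ne] /=.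
  subst i; rewrite bxS byS in hi *; case: (adw j) => /=; solveb.
apply/negbTE; apply/negP => /andP[/eqP h1 /eqP h2]; move/eqP: ne; lia.
Qed.

Lemma ex2 i j : (bx j == bx i) && (by_ j == by_ i + 1) = (j == i.+1) && ~~ adw i.
Proof.
have hi := bxy i; have hj := bxy j.
case: (eqVneq j i.+1) => [e|ne] /=.
  subst j; rewrite bxS byS in hj *; case: (adw i) => /=; solveb.
apply/negbTE; apply/negP => /andP[/eqP h1 /eqP h2]; move/eqP: ne; lia.
Qed.

Lemma ex3 i j : (bx j == bx i + 1) && (by_ j == by_ i) = (j == i.+1) && adw i.
Proof.
have hi := bxy i; have hj := bxy j.
case: (eqVneq j i.+1) => [e|ne] /=.
  subst j; rewrite bxS byS in hj *; case: (adw i) => /=; solveb.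
apply/negbTE; apply/negP => /andP[/eqP h1 /eqP h2]; move/eqP: ne; lia.
Qed.

Lemma ex4 i j : (bx j == bx i) && (by_ j + 1 == by_ i) = (i == j.+1) && ~~ adw j.
Proof.
have hi := bxy i; have hj := bxy j.
case: (eqVneq i j.+1) => [e|ne] /=.
  subst i; rewrite bxS byS in hi *; case: (adw j) => /=; solveb.
apply/negbTE; apply/negP => /andP[/eqP h1 /eqP h2]; move/eqP: ne; lia.
Qed.

Lemma exL (i : 'I_n) (f : nat -> bool) : [exists j : 'I_n, (i == j.+1 :> nat) && f j] = (0 < i) && f i.-1.
Proof.
apply/existsP/andP => [[j /andP[/eqP -> ->]] //|[h1 h2]].
have hj : i.-1 < n by rewrite (leq_ltn_trans (leq_pred _)).
by exists (Ordinal hj); rewrite /= prednK // eqxx h2.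
Qed.

Lemma exR (i : 'I_n) (P : bool) : [exists j : 'I_n, (j == i.+1 :> nat) && P] = (i.+1 < n) && P.
Proof.
apply/existsP/andP => [[j /andP[/eqP e ->]]|[h1 h2]].
  by rewrite -e ltn_ord.
by exists (Ordinal h1); rewrite /= eqxx h2.
Qed.

Lemma LU_corner (i : 'I_n) : is_LU sigma i = corner true i.
Proof.
rewrite /is_LU /corner.
rewrite (eq_existsb (fun j : 'I_n => ex1 i j)) (eq_existsb (fun j : 'I_n => ex2 i j)).
rewrite (exL i adw) exR negb_and negb_and -eqn0Ngt ltn_neqAle ltn_ord andbT negbK.
by case: (adw i.-1); case: (adw i); rewrite /= ?orbF ?orbT.
Qed.

Lemma RL_corner (i : 'I_n) : is_RL sigma i = corner false i.
Proof.
rewrite /is_RL /corner.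
rewrite (eq_existsb (fun j : 'I_n => ex3 i j)) (eq_existsb (fun j : 'I_n => ex4 i j)).
rewrite (exL i (fun j => ~~ adw j)) exR negb_and negb_and -eqn0Ngt ltn_neqAle ltn_ord andbT negbK.
rewrite andbC; by case: (adw i.-1); case: (adw i); rewrite /= ?orbF ?orbT.
Qed.

Local Notation pc c i := (colof c (lab i)).

Lemma pc_ord m (c : {ffun 'I_n -> 'I_m}) (i : 'I_n) : pc c i = val (c (sigma i)).
Proof. by rewrite lab_ord colof_ord. Qed.

Lemma proper_nat m (c : {ffun 'I_n -> 'I_m}) i :
  Defs.proper sigma c -> i.+1 < n -> pc c i != pc c i.+1.
Proof. by move=> /forallP pr h; move: (pr (Ordinal (ltnW h))) => /= /implyP; apply. Qed.

Lemma lab_neq i : i.+1 < n -> lab i != lab i.+1.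
Proof.
move=> h; have h0 : i < n := ltnW h.
change (lab (Ordinal h0) != lab (Ordinal h)); rewrite !lab_ord.
apply/eqP => /val_inj/perm_inj/(congr1 val) /=; lia.
Qed.

Lemma edge_eq m (c : {ffun 'I_n -> 'I_m}) i : Defs.proper sigma c -> i.+1 < n ->
  asc_edge sigma c i = (adw i == (pc c i < pc c i.+1)).
Proof.
move=> pr h; have := proper_nat pr h; have := lab_neq h.
rewrite /asc_edge /Defs.adw.
move: (lab i) (lab i.+1) (colof c (lab i)) (colof c (lab i.+1)) => x y u v.
by case: (ltngtP x y); case: (ltngtP u v).
Qed.

Lemma asc_all m (c : {ffun 'I_n -> 'I_m}) b i : Defs.proper sigma c -> asc sigma c = kb b ->
  i.+1 < n -> asc_edge sigma c i = b.
Proof.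
move=> pr ha h; have h0 : i < n := ltnW h.
suff key : forall j : 'I_n, j.+1 < n -> asc_edge sigma c j = b by exact: (key (Ordinal h0) h).
rewrite /kb /asc in ha; case: b ha => ha.
- have : \sum_(j < n | j.+1 < n) (1 - asc_edge sigma c j) == 0.
    rewrite (@sumnB _ _ _ (fun j : 'I_n => nat_of_bool (asc_edge sigma c j)) (fun _ => 1)).
      by rewrite card_edges ha subnn.
    by move=> j _; case: asc_edge.
  rewrite sum_nat_eq0 => /forallP H j hj; move: (H j); rewrite hj /=; by case: asc_edge.
- move/eqP: ha; rewrite sum_nat_eq0 => /forallP H j hj; move: (H j); rewrite hj /=.
  by case: asc_edge.
Qed.

Lemma corner_min m (c : {ffun 'I_n -> 'I_m}) b i : Defs.proper sigma c -> asc sigma c = kb b ->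
  i < n -> (forall j, j < n -> pc c i <= pc c j) -> corner b i.
Proof.
move=> pr ha hi hmin; rewrite /corner; apply/andP; split.
  case: i hi hmin => [|j] hi hmin; first by [].
  have e := asc_all pr ha hi; rewrite edge_eq // in e.
  have hne := proper_nat pr hi.
  have lt : pc c j.+1 < pc c j by rewrite ltn_neqAle eq_sym hne hmin // ltnW.
  move: e; rewrite ltnNge (ltnW lt) /=.
  by case: (adw j); case: (b).
move: (hi); rewrite leq_eqVlt => /orP[/eqP->|h]; first by rewrite eqxx.
have e := asc_all pr ha h; rewrite edge_eq // in e.
have lt : pc c i < pc c i.+1 by rewrite ltn_neqAle proper_nat // hmin.
move: e; rewrite lt.
by case: (adw i); case: (b); rewrite ?orbT.
Qed.

Lemma corner_max m (c : {ffun 'I_n -> 'I_m}) b i : Defs.proper sigma c -> asc sigma c = kb b ->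
  i < n -> (forall j, j < n -> pc c j <= pc c i) -> corner (~~ b) i.
Proof.
move=> pr ha hi hmax; rewrite /corner; apply/andP; split.
  case: i hi hmax => [|j] hi hmax; first by [].
  have e := asc_all pr ha hi; rewrite edge_eq // in e.
  have hne := proper_nat pr hi.
  have lt : pc c j < pc c j.+1 by rewrite ltn_neqAle hne hmax // ltnW.
  move: e; rewrite lt /=.
  by case: (adw j); case: (b).
move: (hi); rewrite leq_eqVlt => /orP[/eqP->|h]; first by rewrite eqxx.
have e := asc_all pr ha h; rewrite edge_eq // in e.
have lt : pc c i.+1 < pc c i by rewrite ltn_neqAle eq_sym proper_nat // hmax.
move: e; rewrite ltnNge (ltnW lt) /=.
by case: (adw i); case: (b); rewrite ?orbT.
Qed.

Lemma count_min m (c : {ffun 'I_n -> 'I_m}) b : Defs.proper sigma c -> asc sigma c = kb b ->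
  #|[set v : 'I_n | val (c v) == 0]| <= #|[set i : 'I_n | corner b i]|.
Proof.
move=> pr ha.
rewrite -[X in _ <= X](card_imset _ (@perm_inj _ sigma)).
apply: subset_leq_card; apply/subsetP => v; rewrite inE => /eqP h0.
apply/imsetP; exists (sigma^-1 v)%g; last by rewrite permKV.
rewrite inE; apply: (corner_min pr ha) => // j hj.
by rewrite pc_ord permKV h0.
Qed.

Lemma count_max m (c : {ffun 'I_n -> 'I_m}) b : Defs.proper sigma c -> asc sigma c = kb b ->
  #|[set v : 'I_n | val (c v) == m.-1]| <= #|[set i : 'I_n | corner (~~ b) i]|.
Proof.
move=> pr ha.
rewrite -[X in _ <= X](card_imset _ (@perm_inj _ sigma)).
apply: subset_leq_card; apply/subsetP => v; rewrite inE => /eqP h0.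
apply/imsetP; exists (sigma^-1 v)%g; last by rewrite permKV.
rewrite inE; apply: (corner_max pr ha) => // j hj.
rewrite pc_ord permKV h0.
change j with (nat_of_ord (Ordinal hj)); rewrite pc_ord.
have H := ltn_ord (c (sigma (Ordinal hj))).
by rewrite -ltnS (ltn_predK H).
Qed.

Lemma coef0_min b (s : seq nat) : 0 < size s ->
  #|[set i : 'I_n | corner b i]| < nth 0 s 0 -> cqf_coef sigma s (kb b) = 0.
Proof.
move=> hs hlt; apply/eqP; rewrite cards_eq0; apply/eqP/setP => c; rewrite !inE.
apply/negP => /and3P[pr /forallP ct /eqP ha].
move: (ct (Ordinal hs)) => /eqP /= e.
have := count_min pr ha.
have -> : #|[set v | val (c v) == 0]| = #|[set v | c v == Ordinal hs]|.
  by apply: eq_card => v; rewrite !inE.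
rewrite e => H; by move: (leq_ltn_trans H hlt); rewrite ltnn.
Qed.

Lemma coef0_max b (s : seq nat) : 0 < size s ->
  #|[set i : 'I_n | corner (~~ b) i]| < nth 0 s (size s).-1 -> cqf_coef sigma s (kb b) = 0.
Proof.
move=> hs hlt; have hm : (size s).-1 < size s by rewrite ltn_predL.
apply/eqP; rewrite cards_eq0; apply/eqP/setP => c; rewrite !inE.
apply/negP => /and3P[pr /forallP ct /eqP ha].
move: (ct (Ordinal hm)) => /eqP /= e.
have := count_max pr ha.
have -> : #|[set v | val (c v) == (size s).-1]| = #|[set v | c v == Ordinal hm]|.
  by apply: eq_card => v; rewrite !inE.
rewrite e => H; by move: (leq_ltn_trans H hlt); rewrite ltnn.
Qed.

Section Constr.
Variable b : bool.
Local Notation dir j := (adw j == b).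

Fixpoint Lf (i : nat) : nat := if i is j.+1 then (if dir j then (Lf j).+1 else 0) else 0.
Fixpoint Rg (k : nat) : nat :=
  if k is k'.+1 then (if ((n - k).+1 < n) && ~~ dir (n - k) then (Rg k').+1 else 0) else 0.
Definition Rf i := Rg (n - i).
Definition F i := Lf i + Rf i.

Lemma Rf_step i : i.+1 < n -> Rf i = if ~~ dir i then (Rf i.+1).+1 else 0.
Proof.
move=> h; rewrite /Rf.
have e : n - i = (n - i.+1).+1 by rewrite subnSK // ltnW.
rewrite e /= -e subKn; last by apply: ltnW; apply: ltnW.
by rewrite h.
Qed.

Lemma Rf_end i : i.+1 = n -> Rf i = 0.
Proof.
move=> h; rewrite /Rf -[in n - i]h subSnn /=.
by have -> : ((n - 1).+1 < n) = false by rewrite -h subn1 /= ltnn.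
Qed.

Lemma Lf_le i : Lf i <= i.
Proof. elim: i => [|i IH] //=; by case: (dir i). Qed.

Lemma Rg_le k : Rg k <= k.
Proof. elim: k => [|k IH] //=; by case: (_ && _). Qed.

Lemma F_le i : i <= n -> F i <= n.
Proof. move=> h; have := Lf_le i; have := Rg_le (n - i); rewrite /F /Rf; lia. Qed.

Lemma F_up i : i.+1 < n -> dir i -> F i < F i.+1.
Proof. move=> h d; rewrite /F /= (Rf_step h) d /=; lia. Qed.

Lemma F_down i : i.+1 < n -> ~~ dir i -> F i.+1 < F i.
Proof.
move=> h d; rewrite /F /= (Rf_step h) d (negbTE d) /=; lia.
Qed.

Lemma F_corner i : i < n -> corner b i -> F i = 0.
Proof.
rewrite /corner /F => hi /andP[h1 h2].
have -> : Lf i = 0.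
  case: i hi h1 h2 => [|j] //= hi h1 h2.
  by move: h1; case: (adw j == b); case: (adw j); case: (b).
move: (hi); rewrite leq_eqVlt => /orP[/eqP e|h]; first by rewrite Rf_end.
rewrite (Rf_step h).
move: h2; rewrite (ltn_eqF h) /= => ->; by [].
Qed.

Definition alpha : seq nat :=
  [seq #|[set v : 'I_n | F (sigma^-1 v)%g == j]| | j <- iota 0 n.+1].

Lemma size_alpha : size alpha = n.+1.
Proof. by rewrite size_map size_iota. Qed.

Lemma Fb (v : 'I_n) : F (sigma^-1 v)%g < size alpha.
Proof. by rewrite size_alpha ltnS F_le // ltnW. Qed.

Definition c0 : {ffun 'I_n -> 'I_(size alpha)} := [ffun v => Ordinal (Fb v)].

Lemma pc0 i : i < n -> pc c0 i = F i.
Proof.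
move=> h; change i with (nat_of_ord (Ordinal h)).
by rewrite pc_ord ffunE /= permK.
Qed.

Lemma c0_proper : Defs.proper sigma c0.
Proof.
apply/forallP => i; apply/implyP => h.
rewrite pc0 ?ltn_ord // pc0 //.
case: (boolP (dir i)) => d; [have := F_up h d | have := F_down h d];
  move=> lt; apply/eqP => e; move: lt; by rewrite e ltnn.
Qed.

Lemma c0_asc : asc sigma c0 = kb b.
Proof.
rewrite /asc (eq_bigr (fun _ => nat_of_bool b)).
  rewrite /kb; case: (b); last by rewrite big1.
  exact: card_edges.
move=> i h; rewrite (edge_eq c0_proper h) pc0 ?ltn_ord // pc0 //.
case: (boolP (dir i)) => d.
  by rewrite (F_up h d); move: d; case: (adw i); case: (b).
rewrite ltnNge (ltnW (F_down h d)) /=; by move: d; case: (adw i); case: (b).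
Qed.

Lemma c0_content : [forall j : 'I_(size alpha), #|[set v | c0 v == j]| == nth 0 alpha j].
Proof.
apply/forallP => j.
have hj : j < n.+1 by rewrite -size_alpha.
rewrite /alpha (nth_map 0); last by rewrite size_iota.
rewrite nth_iota // add0n.
by apply/eqP/eq_card => v; rewrite !inE -val_eqE ffunE.
Qed.

Lemma coef_pos : 0 < cqf_coef sigma alpha (kb b).
Proof.
rewrite /cqf_coef card_gt0; apply/set0Pn; exists c0.
by rewrite inE c0_proper c0_content c0_asc eqxx.
Qed.

Lemma alpha0 : #|[set i : 'I_n | corner b i]| <= nth 0 alpha 0.
Proof.
rewrite /alpha (nth_map 0) ?size_iota // nth_iota //.
rewrite -[X in X <= _](card_imset _ (@perm_inj _ sigma)).
apply: subset_leq_card; apply/subsetP => v /imsetP[i]; rewrite inE => hc ->.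
by rewrite inE permK (F_corner (ltn_ord i) hc).
Qed.

End Constr.

End S.

Theorem proposition4p2 (n : nat) (sigma : {perm 'I_n}) :
  numLU sigma <> numRL sigma ->
  ~ cqf_palindromic sigma /\ ~ cqf_symmetric sigma.
Proof.
move=> hne.
have eLU : numLU sigma = #|[set i : 'I_n | corner sigma true i]|.
  by apply: eq_card => i; rewrite !inE LU_corner.
have eRL : numRL sigma = #|[set i : 'I_n | corner sigma false i]|.
  by apply: eq_card => i; rewrite !inE RL_corner.
have [b' hb] : exists b', #|[set i : 'I_n | corner sigma (~~ b') i]| <
                          #|[set i : 'I_n | corner sigma b' i]|.
  case: (ltngtP (numLU sigma) (numRL sigma)) => h.
  - by exists false; rewrite -eLU -eRL.
  - by exists true; rewrite -eLU -eRL.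
  - by [].
set s := alpha sigma b'.
have hpos := coef_pos sigma b'.
have h0 := alpha0 sigma b'.
have hs : 0 < size s by rewrite size_alpha.
have hz : cqf_coef sigma s (kb n (~~ b')) = 0.
  apply: coef0_min => //; exact: leq_trans hb h0.
have hk : kb n (~~ b') = n.-1 - kb n b' by rewrite /kb; case: (b'); rewrite ?subnn ?subn0.
split.
- move=> H; have := H s 0 (leq0n _); rewrite subn0.
  move: hpos hz hk; rewrite /kb -/s; case: (b') => /=; rewrite ?subnn ?subn0 => hp hz _ e.
  + by move: hp; rewrite -e hz.
  + by move: hp; rewrite e hz.
- move=> H.
  have hr : cqf_coef sigma (rev s) (kb n b') = 0.
    apply: coef0_max; first by rewrite size_rev.
    rewrite size_rev nth_rev; last by rewrite ltn_predL.
    rewrite prednK // subnn.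
    apply: leq_trans hb h0.
  have := H (kb n b') s (rev s); rewrite perm_sym perm_rev perm_refl => /(_ isT) e.
  by move: hpos; rewrite -/s e hr.
Qed.
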